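(* Let $G$ be a finite symmetric two-player game with pure strategies $I=\{1,\dots,N\}$ and payoff matrix $U$, and let $G'$ be a game built on $G$ by adding mixed strategies as new pure strategies, with associated mixed strategies $p^k\in S_N$, $k\in I'=\{1,\dots,N'\}$. Let $x'(\cdot)$ be a solution of the best-response dynamics in $G'$ and define $x(t):=\sum_{k=1}^{N'}x'_k(t)\,p^k\in S_N$. Then $x(\cdot)$ is a solution of the best-response dynamics in $G$.
   Context: $G'$ with pure strategy set $I'=\{1,\dots,N,N+1,\dots,N'\}$ and payoff matrix $U'$ is built on $G$ by adding mixed strategies as new pure strategies if to each $i\in I'$ is associated $p^i\in S_N$ such that $e'_i\cdot U'e'_j=p^i\cdot Up^j$ for all $i,j\in I'$ (with $e'_i$ the vertices of $S_{N'}$), and $p^i=e_i$ for $1\le i\le N$. Best-response dynamics in a game with payoff matrix $U$: an absolutely continuous function $x(\cdot)$ with $\dot x(t)\in BR(x(t))-x(t)$ for almost every $t$, where $BR(x)=\{y\in S_N: y\cdot Ux=\max_{z\in S_N}z\cdot Ux\}$. *)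

(* Defs.v *)
From HB Require Import structures.
From mathcomp Require Import all_boot all_order all_algebra.
From mathcomp Require Import all_classical all_reals all_analysis.
Set Implicit Arguments. Unset Strict Implicit. Unset Printing Implicit Defensive.
Import Order.TTheory GRing.Theory Num.Theory.
Import numFieldNormedType.Exports.
Local Open Scope classical_set_scope.
Local Open Scope ring_scope.

Definition simplex (R : realType) (N : nat) : set ('I_N -> R) :=
  [set p | (forall i, 0 <= p i) /\ \sum_(i < N) p i = 1].

Definition evec (R : realType) (N : nat) (i : 'I_N) : 'I_N -> R :=
  fun j => (i == j)%:R.

Definition payoff (R : realType) (N : nat) (U : 'M[R]_N) (y x : 'I_N -> R) : R :=
  \sum_(i < N) \sum_(j < N) y i * U i j * x j.

Definition BR (R : realType) (N : nat) (U : 'M[R]_N) (x : 'I_N -> R)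
  : set ('I_N -> R) :=
  [set y | @simplex R N y /\
           forall z, @simplex R N z -> payoff U z x <= payoff U y x].

(* G' (with N' pure strategies, payoff matrix U') is built on G (payoff
   matrix U) by adding mixed strategies as new pure strategies, with
   associated mixed strategies p k; the first N pure strategies of G'
   are those of G. *)
Definition built_on (R : realType) (N N' : nat) (U : 'M[R]_N) (U' : 'M[R]_N')
  (hNN' : (N <= N')%N) (p : 'I_N' -> 'I_N -> R) : Prop :=
  (forall k, @simplex R N (p k)) /\
  (forall i j, U' i j = payoff U (p i) (p j)) /\
  (forall i : 'I_N, p (widen_ord hNN' i) = @evec R N i).

Definition abs_continuous_on (R : realType) (a b : R) (f : R -> R) : Prop :=
  forall e : R, 0 < e -> exists2 d : R, 0 < d &
    forall (n : nat) (l r : 'I_n -> R),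
      (forall k, a <= l k /\ l k <= r k /\ r k <= b) ->
      (forall k k', k != k' -> r k <= l k' \/ r k' <= l k) ->
      \sum_(k < n) (r k - l k) < d ->
      \sum_(k < n) `|f (r k) - f (l k)| < e.

Definition BR_solution (R : realType) (N : nat) (U : 'M[R]_N)
  (x : R -> 'I_N -> R) : Prop :=
  (forall t, 0 <= t -> @simplex R N (x t)) /\
  (forall b, 0 <= b -> forall i, abs_continuous_on 0 b (fun t => x t i)) /\
  {ae (@lebesgue_measure R), forall t : R, 0 <= t ->
     (forall i, derivable (fun s => x s i) t 1) /\
     exists2 y, BR U (x t) y &
       forall i, derive1 (fun s => x s i) t = y i - x t i}.

(* Main.v *)
Require Import Defs.
From HB Require Import structures.
From mathcomp Require Import all_boot all_order all_algebra.
From mathcomp Require Import all_classical all_reals all_analysis.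
From mathcomp Require Import ring lra.
Import Order.TTheory GRing.Theory Num.Theory.
Local Open Scope ring_scope.

Section AC.
Variables (R : realType) (a b : R).

Lemma ac_cst (c : R) : abs_continuous_on a b (fun _ => c).
Proof.
move=> e e0; exists 1 => // n l r _ _ _.
by rewrite big1 // => k _; rewrite subrr normr0.
Qed.

Lemma ac_add f g : abs_continuous_on a b f -> abs_continuous_on a b g ->
  abs_continuous_on a b (fun t => f t + g t).
Proof.
move=> hf hg e e0.
have e2 : 0 < e / 2 by rewrite divr_gt0.
have [d1 d10 H1] := hf _ e2; have [d2 d20 H2] := hg _ e2.
exists (Num.min d1 d2); first by rewrite lt_min d10 d20.
move=> n l r Hlr Hdis Hs.
rewrite lt_min in Hs; case/andP: Hs => Hs1 Hs2.
apply: (le_lt_trans (y := \sum_(k < n) (`|f (r k) - f (l k)| + `|g (r k) - g (l k)|))).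
  apply: ler_sum => k _.
  have -> : f (r k) + g (r k) - (f (l k) + g (l k)) =
    (f (r k) - f (l k)) + (g (r k) - g (l k)) by ring.
  exact: ler_normD.
rewrite big_split /= (splitr e).
by apply: ltrD; [apply: H1|apply: H2].
Qed.

Lemma ac_mulr f (c : R) : abs_continuous_on a b f ->
  abs_continuous_on a b (fun t => f t * c).
Proof.
move=> hf e e0.
have e2 : 0 < e / (`|c| + 1) by rewrite divr_gt0 // ltr_wpDl.
have [d d0 H] := hf _ e2.
exists d => // n l r Hlr Hdis Hs.
have := H n l r Hlr Hdis Hs.
rewrite ltr_pdivlMr ?ltr_wpDl // => Hlt.
apply: (le_lt_trans _ Hlt).
rewrite mulr_suml; apply: ler_sum => k _.
rewrite -mulrBl normrM ler_wpM2l //.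
by rewrite lerDl.
Qed.

Lemma ac_ext f g : (forall t, f t = g t) -> abs_continuous_on a b f ->
  abs_continuous_on a b g.
Proof. by move=> H; have -> : f = g by apply/funext. Qed.

Lemma ac_sum n (F : 'I_n -> R -> R) : (forall k, abs_continuous_on a b (F k)) ->
  abs_continuous_on a b (fun t => \sum_(k < n) F k t).
Proof.
elim: n F => [|n IH] F HF.
  apply: (@ac_ext (fun _ => 0)); first by move=> t; rewrite big_ord0.
  exact: ac_cst.
apply: (@ac_ext (fun t => \sum_(k < n) F (widen_ord (leqnSn n) k) t + F ord_max t)).
  by move=> t; rewrite big_ord_recr.
apply: ac_add; last exact: HF.
exact: (IH (fun k => F (widen_ord (leqnSn n) k))).
Qed.
End AC.
Section Main.
Variables (R : realType) (N N' : nat) (U : 'M[R]_N) (p : 'I_N' -> 'I_N -> R).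

Definition mix (a : 'I_N' -> R) : 'I_N -> R := fun j => \sum_(k < N') a k * p k j.

Lemma mix_simplex a : (forall k, simplex (p k)) -> simplex a -> simplex (mix a).
Proof.
move=> Hp [a0 a1]; split.
  by move=> j; apply: sumr_ge0 => k _; apply: mulr_ge0 => //; case: (Hp k).
rewrite /mix exchange_big /= -[RHS]a1; apply: eq_bigr => k _.
by rewrite -mulr_sumr; case: (Hp k) => _ ->; rewrite mulr1.
Qed.

Lemma payoff_mix a b :
  payoff U (mix a) (mix b) =
  \sum_(k < N') \sum_(l < N') a k * payoff U (p k) (p l) * b l.
Proof.
rewrite /payoff /mix.
transitivity (\sum_(i < N) \sum_(j < N) \sum_(k < N') \sum_(l < N')
   (a k * p k i * U i j * (b l * p l j))).
  apply: eq_bigr => i _; apply: eq_bigr => j _.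
  rewrite mulr_suml mulr_suml; apply: eq_bigr => k _.
  by rewrite mulr_sumr; apply: eq_bigr => l _; rewrite mulrA.
under eq_bigr do rewrite exchange_big /=.
rewrite exchange_big /=; apply: eq_bigr => k _.
under eq_bigr do rewrite exchange_big /=.
rewrite exchange_big /=; apply: eq_bigr => l _.
rewrite mulr_sumr mulr_suml; apply: eq_bigr => i _.
rewrite mulr_sumr mulr_suml; apply: eq_bigr => j _.
ring.
Qed.
End Main.

Section Emb.
Variables (R : realType) (N N' : nat) (hNN' : (N <= N')%N).

Definition emb (z : 'I_N -> R) : 'I_N' -> R :=
  fun k => \sum_(i < N) z i * (widen_ord hNN' i == k)%:R.

Lemma sum_delta (i : 'I_N) (F : 'I_N' -> R) :
  \sum_(k < N') (widen_ord hNN' i == k)%:R * F k = F (widen_ord hNN' i).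
Proof.
rewrite (bigD1 (widen_ord hNN' i)) //= eqxx mul1r big1 ?addr0 // => k hk.
by rewrite eq_sym (negbTE hk) mul0r.
Qed.

Lemma emb_simplex z : simplex z -> simplex (emb z).
Proof.
move=> [z0 z1]; split.
  by move=> k; apply: sumr_ge0 => i _; apply: mulr_ge0.
rewrite /emb exchange_big /= -[RHS]z1; apply: eq_bigr => i _.
rewrite -mulr_sumr.
have := sum_delta i (fun _ => 1); under eq_bigr do rewrite mulr1.
by move=> ->; rewrite mulr1.
Qed.

Lemma mix_emb (p : 'I_N' -> 'I_N -> R) z :
  (forall i : 'I_N, p (widen_ord hNN' i) = @evec R N i) ->
  @mix R N N' p (emb z) = z.
Proof.
move=> Hp; apply/funext => j; rewrite /mix /emb.
under eq_bigr do rewrite mulr_suml.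
rewrite exchange_big /=.
transitivity (\sum_(i < N) z i * (i == j)%:R).
  apply: eq_bigr => i _.
  have -> : (i == j)%:R = p (widen_ord hNN' i) j :> R by rewrite Hp.
  rewrite -(sum_delta i (fun k => p k j)) mulr_sumr.
  by apply: eq_bigr => k _; rewrite mulrA.
rewrite (bigD1 j) //= eqxx mulr1 big1 ?addr0 // => i hi.
by rewrite (negbTE hi) mulr0.
Qed.
End Emb.

Lemma deriv_mix (R : realType) (N N' : nat) (p : 'I_N' -> 'I_N -> R)
  (x' : R -> 'I_N' -> R) t j :
  (forall k, derivable (fun s => x' s k) t 1) ->
  is_derive t 1 (fun s => \sum_(k < N') x' s k * p k j)
    (\sum_(k < N') 'D_1 (fun s => x' s k) t * p k j).
Proof.
move=> Hd.
have H : forall k, is_derive t 1 (fun s => x' s k * p k j)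
                      ('D_1 (fun s => x' s k) t * p k j).
  move=> k.
  have := is_deriveM (derivableP (Hd k)) (is_derive_cst (p k j) t 1).
  rewrite scaler0 add0r => HH.
  have -> : (fun s => x' s k * p k j) = (fun s => x' s k) * cst (p k j).
    by apply/funext.
  have -> : 'D_1 (fun s => x' s k) t * p k j = cst (p k j) t *: 'D_1 (fun s => x' s k) t.
    by rewrite /= mulrC.
  exact: HH.
have := is_derive_sum H.
by rewrite fct_sumE.
Qed.

Theorem proposition7 (R : realType) (N N' : nat) (U : 'M[R]_N) (U' : 'M[R]_N')
  (hNN' : (N <= N')%N) (p : 'I_N' -> 'I_N -> R) (x' : R -> 'I_N' -> R) :
  built_on U U' hNN' p ->
  BR_solution U' x' ->
  BR_solution U (fun t j => \sum_(k < N') x' t k * p k j).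
Proof.
move=> [Hp [HU' He]] [Hs' [Hac' Hae']].
have HP : forall a b, payoff U' a b = payoff U (@mix R N N' p a) (@mix R N N' p b).
  move=> a b; rewrite payoff_mix /payoff.
  apply: eq_bigr => k _; apply: eq_bigr => l _; by rewrite HU'.
split.
  by move=> t t0; exact: (@mix_simplex R N N' p (x' t) Hp (Hs' t t0)).
split.
  move=> b b0 j; apply: ac_sum => k; apply: ac_mulr; exact: Hac'.
apply: (@filterS _ _ (ae_filter_ringOfSetsType (@lebesgue_measure R)) _ _ _ Hae') => t Ht t0.
case: (Ht t0) => Hd [y' [Hy's Hy'] Hdy'].
split.
  by move=> j; apply: ex_derive; apply: deriv_mix.
exists (@mix R N N' p y').
  split; first exact: mix_simplex.
  move=> z zs.
  rewrite -[X in payoff U X _](@mix_emb R N N' hNN' p z He).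
  rewrite -!HP; apply: Hy'; exact: (@emb_simplex R N N' hNN').
move=> j.
have HD := @deriv_mix R N N' p x' t j Hd.
rewrite derive1E derive_val /mix -sumrB.
apply: eq_bigr => k _; by rewrite -mulrBl -Hdy' derive1E.
Qed.
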